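(* Let $k$ be a field of characteristic $0$ and let $V\subset\mathbb{P}^n_k$ be a geometrically integral complete intersection of two quadrics $Q_1=Q_2=0$ which is not a cone. If the homogeneous polynomial $P(\lambda,\mu)=\det(\lambda Q_1+\mu Q_2)$ vanishes identically, then $V$ has infinitely many singular $k$-rational points.
   Context: Here $\det(\lambda Q_1+\mu Q_2)$ is the determinant of the symmetric matrix of the quadratic form $\lambda Q_1+\mu Q_2$ in $n+1$ variables. *)

(* Defs.v *)
From HB Require Import structures.
From mathcomp Require Import all_boot all_order all_algebra.
From mathcomp Require Import mpoly.
Set Implicit Arguments. Unset Strict Implicit. Unset Printing Implicit Defensive.
Import Order.TTheory GRing.Theory Num.Theory.
Local Open Scope ring_scope.

(* Projective space P^n is modelled by nonzero vectors of R^(n+1) up to scaling;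
   a point of P^n is represented by a function x : 'I_n.+1 -> R, x <> 0. *)

Definition qform (R : comNzRingType) (N : nat) (A : 'M[R]_N) : {mpoly R[N]} :=
  \sum_(i < N) \sum_(j < N) A i j *: ('X_i * 'X_j).

Definition in_ideal2 (R : comNzRingType) (N : nat) (f g p : {mpoly R[N]}) : Prop :=
  exists a b : {mpoly R[N]}, p = a * f + b * g.

(* (f, g) is a regular sequence in R[x]: the standard definition of
   "V(f,g) is a complete intersection". *)
Definition regular_seq2 (R : comNzRingType) (N : nat) (f g : {mpoly R[N]}) : Prop :=
  [/\ ~ in_ideal2 f g 1,
      (forall h, h * f = 0 -> h = 0) &
      (forall h, (exists c, h * g = c * f) -> exists c', h = c' * f)].

(* V = {f = g = 0} is geometrically integral: after base change to any
   algebraically closed extension L of k, the (saturated, since complete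
   intersection) homogeneous ideal (f, g) is prime. *)
Definition geom_integral (k : fieldType) (N : nat) (f g : {mpoly k[N]}) : Prop :=
  forall (L : closedFieldType) (s : {rmorphism k -> L}),
    let fL := map_mpoly s f in let gL := map_mpoly s g in
    ~ in_ideal2 fL gL 1 /\
    forall p q : {mpoly L[N]}, in_ideal2 fL gL (p * q) ->
      in_ideal2 fL gL p \/ in_ideal2 fL gL q.

Definition on_V (L : comNzRingType) (N : nat) (f g : {mpoly L[N]})
    (x : 'I_N -> L) : Prop :=
  x <> (fun _ => 0) /\ f.@[x] = 0 /\ g.@[x] = 0.

Definition is_cone (k : fieldType) (N : nat) (f g : {mpoly k[N]}) : Prop :=
  exists (L : closedFieldType) (s : {rmorphism k -> L}) (p : 'I_N -> L),
    let fL := map_mpoly s f in let gL := map_mpoly s g in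
    on_V fL gL p /\
    forall x, on_V fL gL x -> forall a b : L,
      fL.@[fun i => a * p i + b * x i] = 0 /\
      gL.@[fun i => a * p i + b * x i] = 0.

(* x is a singular point of the complete intersection V(f, g): x in V and the
   Jacobian matrix of (f, g) at x has rank < 2 (Jacobian criterion). *)
Definition singular_pt (k : fieldType) (N : nat) (f g : {mpoly k[N]})
    (x : 'I_N -> k) : Prop :=
  on_V f g x /\
  (\rank (\matrix_(r < 2, j < N)
            (if r == ord0 then (f^`M(j)).@[x] else (g^`M(j)).@[x])) < 2)%N.

Definition proj_eq (k : fieldType) (N : nat) (x y : 'I_N -> k) : Prop :=
  exists c : k, c != 0 /\ forall i, x i = c * y i.

Definition infinitely_many_pts (k : fieldType) (N : nat) (P : ('I_N -> k) -> Prop)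
  : Prop :=
  ~ exists (m : nat) (y : 'I_m -> ('I_N -> k)),
      forall x, P x -> exists j, proj_eq x (y j).

Definition pencil_det (k : fieldType) (N : nat) (A1 A2 : 'M[k]_N) : {mpoly k[2]} :=
  \det (\matrix_(i < N, j < N)
          ('X_(@ord0 1) * (A1 i j)%:MP + 'X_(@ord_max 1) * (A2 i j)%:MP)).

(* Main.v *)
Require Import Defs.
From HB Require Import structures.
From mathcomp Require Import all_boot all_order all_algebra.
From mathcomp Require Import mpoly.
From mathcomp Require Import ring.
From mathcomp Require Import closed_field.
From mathcomp Require Import boolp classical_sets filter.
From Stdlib Require Import ClassicalEpsilon.
Set Implicit Arguments. Unset Strict Implicit. Unset Printing Implicit Defensive.
Import GRing.Theory.
Local Open Scope ring_scope.
Module PC1.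

Inductive tm := TV of nat | T0 | T1 | TAdd of tm & tm | TOpp of tm
  | TMul of tm & tm | TInv of tm.

Fixpoint tm2tree (e : tm) : GenTree.tree nat := match e with
 | TV n => GenTree.Leaf n
 | T0 => GenTree.Node 0 [::]
 | T1 => GenTree.Node 1 [::]
 | TAdd a b => GenTree.Node 2 [:: tm2tree a; tm2tree b]
 | TOpp a => GenTree.Node 3 [:: tm2tree a]
 | TMul a b => GenTree.Node 4 [:: tm2tree a; tm2tree b]
 | TInv a => GenTree.Node 5 [:: tm2tree a]
 end.

Fixpoint tree2tm (t : GenTree.tree nat) : option tm := match t with
 | GenTree.Leaf n => Some (TV n)
 | GenTree.Node 0 [::] => Some T0
 | GenTree.Node 1 [::] => Some T1
 | GenTree.Node 2 [:: a; b] =>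
    obind (fun a => omap (TAdd a) (tree2tm b)) (tree2tm a)
 | GenTree.Node 3 [:: a] => omap TOpp (tree2tm a)
 | GenTree.Node 4 [:: a; b] =>
    obind (fun a => omap (TMul a) (tree2tm b)) (tree2tm a)
 | GenTree.Node 5 [:: a] => omap TInv (tree2tm a)
 | _ => None
 end.

Lemma tm2treeK : pcancel tm2tree tree2tm.
Proof. by elim=> //= [a -> b ->|a ->|a -> b ->|a ->]. Qed.

HB.instance Definition _ := Countable.copy tm (pcan_type tm2treeK).

Section SubF.
Variables (k : fieldType) (s : seq k).

Fixpoint tev (e : tm) : k := match e with
 | TV n => nth 0 s n
 | T0 => 0 | T1 => 1
 | TAdd a b => tev a + tev b
 | TOpp a => - tev a
 | TMul a b => tev a * tev b
 | TInv a => (tev a)^-1 end.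

Definition inF : pred k := fun x => `[< exists e, tev e = x >].

Lemma inFP x : reflect (exists e, tev e = x) (inF x).
Proof. exact: asboolP. Qed.

Lemma inF_closed : GRing.divring_closed inF.
Proof.
split.
- by apply/inFP; exists T1.
- move=> x y /inFP[a <-] /inFP[b <-]; apply/inFP; exists (TAdd a (TOpp b)) => //.
- move=> x y /inFP[a <-] /inFP[b <-]; apply/inFP; exists (TMul a (TInv b)) => //.
Qed.

HB.instance Definition _ := GRing.isDivringClosed.Build k inF inF_closed.

Definition SF := {x : k | inF x}.
HB.instance Definition _ := [isSub of SF for (@sval k inF)].
HB.instance Definition _ := [Equality of SF by <:].
HB.instance Definition _ := [Choice of SF by <:].
HB.instance Definition _ := [SubChoice_isSubComUnitRing of SF by <:].
HB.instance Definition _ := [SubComUnitRing_isSubIntegralDomain of SF by <:].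
HB.instance Definition _ := [SubIntegralDomain_isSubField of SF by <:].

Lemma sf_ex (x : SF) : exists e, tev e == val x.
Proof. by have [e <-] := asboolW (valP x); exists e. Qed.
Definition sf_code (x : SF) : tm := xchoose (sf_ex x).
Lemma sf_codeK : pcancel sf_code (fun e => insub (tev e)).
Proof.
move=> x; have /eqP e := xchooseP (sf_ex x).
rewrite /sf_code e; exact: valK.
Qed.
HB.instance Definition _ := PCanIsCountable sf_codeK.
Definition SFc : countFieldType := SF.
Lemma inF_nth i : (i < size s)%N -> inF (nth 0 s i).
Proof. by move=> _; apply/inFP; exists (TV i). Qed.
End SubF.

End PC1.
Import PC1.

Module PC2.
Local Open Scope classical_set_scope.

Section UP.
Variables (I : Type) (U : set_system I) (UF : UltraFilter U)
  (C : I -> closedFieldType).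
Local Notation P := (forall i, C i).

Let PF : ProperFilter U := ultra_proper.
Let FF : Filter U := filter_filter.

Definition eqv (f g : P) : Prop := U [set i | f i = g i].

Lemma filter_imp (S1 S2 : set I) : U S1 -> (forall i, S1 i -> S2 i) -> U S2.
Proof. by move=> h1 h; apply: filterS h1 => i /h. Qed.

Lemma filter_imp2 (S1 S2 S3 : set I) : U S1 -> U S2 ->
  (forall i, S1 i -> S2 i -> S3 i) -> U S3.
Proof.
move=> h1 h2 h; apply: (filter_imp (filterI h1 h2)) => i [].
exact: h.
Qed.

Lemma eqv_refl f : eqv f f.
Proof. by apply: (filter_imp filterT). Qed.

Lemma eqv_sym f g : eqv f g -> eqv g f.
Proof. by move=> h; apply: (filter_imp h) => i /= ->. Qed.

Lemma eqv_trans f g h : eqv f g -> eqv g h -> eqv f h.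
Proof. by move=> h1 h2; apply: (filter_imp2 h1 h2) => i /= -> ->. Qed.

Definition p0 : P := fun i => 0.
Definition canon (f : P) : P := epsilon (inhabits p0) (eqv f).

Lemma canonP f : eqv f (canon f).
Proof. by apply: epsilon_spec; exists f; apply: eqv_refl. Qed.

Lemma canon_eq f g : eqv f g -> canon f = canon g.
Proof.
move=> h; rewrite /canon; congr epsilon; apply: funext => x.
apply: propext; split => hx.
  exact: eqv_trans (eqv_sym h) hx.
exact: eqv_trans h hx.
Qed.

Definition UQ := {f : P | canon f = f}.
HB.instance Definition _ := gen_eqMixin UQ.
HB.instance Definition _ := gen_choiceMixin UQ.

Definition pi (f : P) : UQ := exist _ (canon f) (canon_eq (eqv_sym (canonP f))).

Lemma piK (x : UQ) : pi (proj1_sig x) = x.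
Proof. by case: x => f e; apply: eq_exist. Qed.

Lemma pi_eq f g : eqv f g -> pi f = pi g.
Proof. by move=> h; apply: eq_exist; apply: canon_eq. Qed.

Lemma eqv_pi f g : pi f = pi g -> eqv f g.
Proof.
move=> /(congr1 (@proj1_sig _ _)) /= h.
apply: eqv_trans (canonP f) _; rewrite h; exact: eqv_sym (canonP g).
Qed.

Lemma pi_ext f g : (forall i, f i = g i) -> pi f = pi g.
Proof. by move=> h; congr pi; apply: functional_extensionality_dep. Qed.

Lemma eqv_op1 (op : forall i, C i -> C i) f f' : eqv f f' ->
  eqv (fun i => op i (f i)) (fun i => op i (f' i)).
Proof. by move=> h; apply: (filter_imp h) => i /= ->. Qed.

Lemma eqv_op2 (op : forall i, C i -> C i -> C i) f f' g g' : eqv f f' -> eqv g g' ->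
  eqv (fun i => op i (f i) (g i)) (fun i => op i (f' i) (g' i)).
Proof. by move=> h1 h2; apply: (filter_imp2 h1 h2) => i /= -> ->. Qed.

Local Notation val := (@proj1_sig _ _).

Definition uzero : UQ := pi p0.
Definition uone : UQ := pi (fun i => 1).
Definition uopp (x : UQ) : UQ := pi (fun i => - val x i).
Definition uadd (x y : UQ) : UQ := pi (fun i => val x i + val y i).
Definition umul (x y : UQ) : UQ := pi (fun i => val x i * val y i).
Definition uinv (x : UQ) : UQ := pi (fun i => (val x i)^-1).

Lemma piN f : pi (fun i => - f i) = uopp (pi f).
Proof. apply: pi_eq; apply: (eqv_op1 (fun i x => - x)); exact: canonP. Qed.
Lemma piD f g : pi (fun i => f i + g i) = uadd (pi f) (pi g).
Proof. apply: pi_eq; apply: (eqv_op2 (fun i x y => x + y)); exact: canonP. Qed.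
Lemma piM f g : pi (fun i => f i * g i) = umul (pi f) (pi g).
Proof. apply: pi_eq; apply: (eqv_op2 (fun i x y => x * y)); exact: canonP. Qed.
Lemma piV f : pi (fun i => (f i)^-1) = uinv (pi f).
Proof. apply: pi_eq; apply: (eqv_op1 (fun i x => x^-1)); exact: canonP. Qed.

Lemma uaddA : associative uadd.
Proof.
move=> x y z; rewrite -[x]piK -[y]piK -[z]piK -!piD; apply: pi_ext => i.
exact: addrA.
Qed.
Lemma uaddC : commutative uadd.
Proof.
move=> x y; rewrite -[x]piK -[y]piK -!piD; apply: pi_ext => i; exact: addrC.
Qed.
Lemma uadd0 : left_id uzero uadd.
Proof.
move=> x; rewrite -[x]piK /uzero -!piD; apply: pi_ext => i; exact: add0r.
Qed.
Lemma uaddN : left_inverse uzero uopp uadd.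
Proof.
move=> x; rewrite -[x]piK /uzero -piN -!piD; apply: pi_ext => i; exact: addNr.
Qed.

HB.instance Definition _ := GRing.isZmodule.Build UQ uaddA uaddC uadd0 uaddN.

Lemma umulA : associative umul.
Proof.
move=> x y z; rewrite -[x]piK -[y]piK -[z]piK -!piM; apply: pi_ext => i.
exact: mulrA.
Qed.
Lemma umulC : commutative umul.
Proof.
move=> x y; rewrite -[x]piK -[y]piK -!piM; apply: pi_ext => i; exact: mulrC.
Qed.
Lemma umul1 : left_id uone umul.
Proof.
move=> x; rewrite -[x]piK /uone -!piM; apply: pi_ext => i; exact: mul1r.
Qed.
Lemma umulD : left_distributive umul uadd.
Proof.
move=> x y z; rewrite -[x]piK -[y]piK -[z]piK.
rewrite -(piD (proj1_sig x)) -(piM _ (proj1_sig z)) -(piM (proj1_sig x)) -(piM (proj1_sig y)) -piD.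
apply: pi_ext => i; exact: mulrDl.
Qed.
Lemma uone_neq0 : uone != (0 : UQ).
Proof.
apply/eqP => /eqv_pi h; apply: (@filter_not_empty _ U PF).
have -> : set0 = [set i | (1 : C i) = p0 i] :> set I.
  by apply/seteqP; split => i //= /eqP; rewrite oner_eq0.
exact: h.
Qed.

HB.instance Definition _ := GRing.Zmodule_isComNzRing.Build UQ
  umulA umulC umul1 umulD uone_neq0.

Lemma pi0 : pi p0 = 0. Proof. by []. Qed.
Lemma pi1 : pi (fun i => 1) = 1. Proof. by []. Qed.

Lemma umulVf (x : UQ) : x != 0 -> uinv x * x = 1.
Proof.
rewrite -[x]piK => nz.
have [h|h] := in_ultra_setVsetC [set i | val x i = 0] UF.
  by case/eqP: nz; rewrite -pi0; apply: pi_eq.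
rewrite -piV /GRing.mul /= -piM -pi1; apply: pi_eq.
apply: (filter_imp h) => i /= hi; apply: mulVf; exact/eqP.
Qed.

Lemma uinv0 : uinv 0 = 0.
Proof. by rewrite -pi0 -piV; apply: pi_ext => i; rewrite invr0. Qed.

HB.instance Definition _ := GRing.ComNzRing_isField.Build UQ umulVf uinv0.

Lemma piX f n : pi (fun i => f i ^+ n) = (pi f) ^+ n.
Proof.
elim: n => [|n IH]; first by rewrite expr0 -pi1; apply: pi_ext => i; rewrite expr0.
rewrite exprS -IH /GRing.mul /= -piM; apply: pi_ext => i; by rewrite exprS.
Qed.

Lemma pi_sum n (F : nat -> P) :
  pi (fun i => \sum_(j < n) F j i) = \sum_(j < n) pi (F j).
Proof.
elim: n => [|n IH]; first by rewrite big_ord0 -pi0; apply: pi_ext => i; rewrite big_ord0.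
rewrite big_ord_recr /= -IH.
transitivity (pi (fun i => \sum_(j < n) F j i + F n i)); last by rewrite piD.
by apply: pi_ext => i; rewrite big_ord_recr.
Qed.

Lemma uclosed : GRing.closed_field_axiom UQ.
Proof.
move=> n Pc n_gt0.
have ex i : exists x : C i, x ^+ n = \sum_(j < n) val (Pc j) i * x ^+ j.
  exact: (@solve_monicpoly (C i) n (fun j => proj1_sig (Pc j) i) n_gt0).
pose r : P := fun i => proj1_sig (cid (ex i)).
exists (pi r); rewrite -piX.
have -> : \sum_(j < n) Pc j * pi r ^+ j =
          \sum_(j < n) pi (fun i => val (Pc j) i * r i ^+ j).
  apply: eq_bigr => j _; rewrite piM piX piK //.
rewrite -(pi_sum n (fun j i => proj1_sig (Pc j) i * r i ^+ j)); apply: pi_ext => i.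
exact: (proj2_sig (cid (ex i))).
Qed.

HB.instance Definition _ := Field_isAlgClosed.Build UQ uclosed.

Definition UQc : closedFieldType := UQ.
End UP.

End PC2.
Import PC2.

Module PC3.
Local Open Scope classical_set_scope.

Section Clo.
Variable k : fieldType.
Definition Kc (t : seq k) := tag (countable_algebraic_closure (SFc t)).
Definition Ke (t : seq k) : {rmorphism SFc t -> Kc t} :=
  sval (tagged (countable_algebraic_closure (SFc t))).
Definition CC (t : seq k) : closedFieldType := Kc t.
Definition ex (t : seq k) (x : k) : CC t :=
  if (insub x : option (SF t)) is Some a then Ke t a else 0.
Lemma ex_val t (a : SF t) : ex t (val a) = Ke t a.
Proof. by rewrite /ex valK. Qed.
Lemma mem_inF (t : seq k) (x : k) : x \in t -> inF t x.
Proof. by move=> h; rewrite -[x](nth_index 0 h); apply: inF_nth; rewrite index_mem. Qed.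

Definition Bs (s : seq k) : set (seq k) := [set t : seq k | all (fun x => x \in t) s].

Variables (G : set_system (seq k)) (UG : UltraFilter G)
  (GB : forall s, G (Bs s)).

Definition phi (x : k) : UQc UG CC := @pi _ _ UG CC (fun t => ex t x).

Lemma phiD : {morph phi : x y / x + y}.
Proof.
move=> x y.
have -> : phi x + phi y = @pi _ _ UG CC (fun t => ex t x + ex t y) by rewrite piD.
apply: pi_eq.
apply: (filter_imp UG (GB [:: x; y])) => t /= h.
case/and3P: h => /mem_inF hx /mem_inF hy _.
pose a : SF t := Sub x hx; pose b : SF t := Sub y hy.
have -> : x + y = val (a + b) by rewrite rmorphD.
by rewrite ex_val rmorphD -!ex_val.
Qed.

Lemma phiM : {morph phi : x y / x * y}.
Proof.
move=> x y.
have -> : phi x * phi y = @pi _ _ UG CC (fun t => ex t x * ex t y) by rewrite piM.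
apply: pi_eq.
apply: (filter_imp UG (GB [:: x; y])) => t /= h.
case/and3P: h => /mem_inF hx /mem_inF hy _.
pose a : SF t := Sub x hx; pose b : SF t := Sub y hy.
have -> : x * y = val (a * b) by rewrite rmorphM.
by rewrite ex_val rmorphM -!ex_val.
Qed.

Lemma phi1 : phi 1 = 1.
Proof.
apply: (pi_eq UG); apply: (filter_imp UG (GB [::])) => t _ /=.
have h1 : inF t 1 by apply: rpred1.
pose a : SF t := Sub 1 h1.
have -> : (1 : k) = val (1 : SF t) by rewrite rmorph1.
by rewrite ex_val rmorph1.
Qed.

Lemma phi0 : phi 0 = 0.
Proof.
apply: (pi_eq UG); apply: (filter_imp UG (GB [::])) => t _ /=.
have -> : (0 : k) = val (0 : SF t) by rewrite rmorph0.
by rewrite ex_val rmorph0.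
Qed.

HB.instance Definition _ := GRing.isNmodMorphism.Build k (UQc UG CC) phi (phi0, phiD).
HB.instance Definition _ := GRing.isMonoidMorphism.Build k (UQc UG CC) phi (phi1, phiM).
Definition phiR : {rmorphism k -> UQc UG CC} := phi.
End Clo.

Lemma closure_exists (k : fieldType) :
  exists (L : closedFieldType) (s : {rmorphism k -> L}), True.
Proof.
have PF : ProperFilter (filter_from setT (@Bs k)).
  apply: filter_from_proper.
    apply: filter_from_filter; first by exists [::].
    move=> s1 s2 _ _; exists (s1 ++ s2) => // t; rewrite /Bs /= all_cat => /andP[a b]; by split.
  by move=> s _; exists s; apply/allP => x.
have [G [UG sub]] := ultraFilterLemma PF.
have GB s : G (Bs s) by apply: sub; exists s.
by exists (UQc UG (@CC k)), (phiR UG GB).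
Qed.


End PC3.
Import PC3.


Section Q.
Variables (R : comNzRingType) (N : nat).

Definition bil (A : 'M[R]_N) (y z : 'I_N -> R) :=
  \sum_(i < N) \sum_(j < N) A i j * y i * z j.

Lemma qform_eval (A : 'M[R]_N) x : (qform A).@[x] = bil A x x.
Proof.
rewrite /qform /bil raddf_sum; apply: eq_bigr => i _.
rewrite raddf_sum; apply: eq_bigr => j _.
by rewrite /= mevalZ mevalM !mevalXU mulrA.
Qed.

Lemma mderivXX (i j : 'I_N) : ('X_i : {mpoly R[N]})^`M(j) = (i == j)%:R.
Proof.
rewrite mderivX mnm1E; case: eqP => [->|_]; last by rewrite scale0r.
have -> : (U_(j) - U_(j))%MM = 0%MM by apply/mnmP => l; rewrite mnmBE mnm0E subnn.
by rewrite mpolyX0 scale1r.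
Qed.

Lemma sum_delta (F : 'I_N -> R) j : \sum_(i < N) (i == j)%:R * F i = F j.
Proof.
rewrite (bigD1 j) //= eqxx mul1r big1 ?addr0 // => i /negbTE->.
by rewrite mul0r.
Qed.

Lemma qform_deriv_eval (A : 'M[R]_N) x j :
  ((qform A)^`M(j)).@[x] = \sum_(i < N) (A i j + A j i) * x i.
Proof.
rewrite /qform (raddf_sum (mderiv j)) raddf_sum.
under eq_bigr => i _.
  rewrite (raddf_sum (mderiv j)) raddf_sum.
  under eq_bigr => l _ do
    rewrite /= mderivZ mderivM !mderivXX /= mevalZ mevalD !mevalM !mevalMn !meval1 !mevalXU.
  over.
rewrite /=.
transitivity (\sum_(i < N) \sum_(l < N) ((i == j)%:R * (A i l * x l)) +
  \sum_(i < N) \sum_(l < N) ((l == j)%:R * (A i l * x i))).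
  rewrite -big_split; apply: eq_bigr => i _; rewrite -big_split.
  by apply: eq_bigr => l _ /=; ring.
rewrite [X in X + _]exchange_big /=.
under eq_bigr => l _ do rewrite sum_delta.
under [X in _ + X]eq_bigr => i _ do rewrite sum_delta.
by rewrite addrC -big_split; apply: eq_bigr => i _ /=; ring.
Qed.

Lemma bil_kerL (A : 'M[R]_N) y z :
  (forall j, \sum_(i < N) y i * A i j = 0) -> bil A y z = 0.
Proof.
move=> h; rewrite /bil exchange_big /=.
transitivity (\sum_(j < N) (\sum_(i < N) y i * A i j) * z j).
  apply: eq_bigr => j _; rewrite mulr_suml; apply: eq_bigr => i _; ring.
by apply: big1 => j _; rewrite h mul0r.
Qed.

Lemma bil_kerR (A : 'M[R]_N) y z :
  (forall i, \sum_(j < N) A i j * z j = 0) -> bil A y z = 0.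
Proof.
move=> h; rewrite /bil.
transitivity (\sum_(i < N) y i * (\sum_(j < N) A i j * z j)).
  apply: eq_bigr => i _; rewrite mulr_sumr; apply: eq_bigr => j _; ring.
by apply: big1 => i _; rewrite h mulr0.
Qed.

Lemma bil_sym (A : 'M[R]_N) y z : A^T = A -> bil A y z = bil A z y.
Proof.
move=> hA; rewrite /bil exchange_big /=; apply: eq_bigr => j _.
apply: eq_bigr => i _; have := congr1 (fun M : 'M[R]_N => M i j) hA.
rewrite mxE => ->; ring.
Qed.

Lemma bil_addA (A A' : 'M[R]_N) c y z :
  bil (A + c *: A') y z = bil A y z + c * bil A' y z.
Proof.
rewrite /bil mulr_sumr -big_split; apply: eq_bigr => i _.
rewrite mulr_sumr -big_split; apply: eq_bigr => j _ /=; rewrite !mxE; ring.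
Qed.

Lemma bil_linL (A : 'M[R]_N) a b y z w :
  bil A (fun i => a * y i + b * z i) w = a * bil A y w + b * bil A z w.
Proof.
rewrite /bil !mulr_sumr -big_split; apply: eq_bigr => i _.
rewrite !mulr_sumr -big_split; apply: eq_bigr => j _ /=; ring.
Qed.

Lemma bil_linR (A : 'M[R]_N) a b y z w :
  bil A w (fun i => a * y i + b * z i) = a * bil A w y + b * bil A w z.
Proof.
rewrite /bil !mulr_sumr -big_split; apply: eq_bigr => i _.
rewrite !mulr_sumr -big_split; apply: eq_bigr => j _ /=; ring.
Qed.

Lemma bil_cone (A : 'M[R]_N) y x a b : A^T = A ->
  (forall j, \sum_(i < N) y i * A i j = 0) ->
  bil A (fun i => a * y i + b * x i) (fun i => a * y i + b * x i) =
  b ^+ 2 * bil A x x.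
Proof.
move=> hA hy; rewrite bil_linL !bil_linR.
rewrite (bil_kerL y hy) (bil_kerL x hy) (bil_sym x y hA) (bil_kerL x hy); ring.
Qed.
End Q.

Lemma map_qform (R S : comNzRingType) (s : {rmorphism R -> S}) N (A : 'M[R]_N) :
  map_mpoly s (qform A) = qform (map_mx s A).
Proof.
rewrite /qform rmorph_sum; apply: eq_bigr => i _.
rewrite rmorph_sum; apply: eq_bigr => j _.
by rewrite /= map_mpolyZ rmorphM /= !map_mpolyX mxE.
Qed.



Section F.
Variables (k : fieldType) (hc : [pchar k] =i pred0).

Lemma natr_inj0 i j : i%:R = j%:R :> k -> i = j.
Proof.
have H := (pcharf0P k).1 hc.
wlog le : i j / (i <= j)%N.
  move=> W h; case: (leqP i j) => [|/ltnW] hl; first exact: W.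
  by apply/esym/W => //; rewrite h.
move=> h; have : (j - i)%:R == 0 :> k by rewrite natrB // h subrr.
by rewrite H subn_eq0 => hji; apply/eqP; rewrite eqn_leq le hji.
Qed.

Lemma exists_nonroot (p : {poly k}) (r : seq k) : p != 0 ->
  exists x, x \notin r /\ p.[x] != 0.
Proof.
move=> pn0; pose q := p * \prod_(a <- r) ('X - a%:P).
have qn0 : q != 0 by rewrite mulf_neq0 // monic_neq0 // monic_prod_XsubC.
pose rs := [seq i%:R | i <- iota 0 (size q)] : seq k.
have urs : uniq rs.
  by rewrite map_inj_uniq ?iota_uniq // => i j /natr_inj0.
have : ~~ all (root q) rs.
  apply/negP => hall; have := max_poly_roots qn0 hall urs.
  by rewrite size_map size_iota ltnn.
case/allPn => x _; rewrite /root /q hornerM mulf_eq0 negb_or => /andP[h1 h2].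
exists x; split => //; move: h2; apply: contra => xr.
by rewrite -/(root _ x) root_prod_XsubC.
Qed.

Lemma build_seq (p : {poly k}) m : p != 0 ->
  exists ts : seq k, [/\ size ts = m, uniq ts & all (fun t => p.[t] != 0) ts].
Proof.
move=> pn0; elim: m => [|m [ts [hs hu ha]]]; first by exists [::].
have [x [xn px]] := exists_nonroot ts pn0.
by exists (x :: ts); rewrite /= hs xn hu px ha.
Qed.

Lemma poly_eq0_except (p : {poly k}) t : (forall s, s != t -> p.[s] = 0) -> p = 0.
Proof.
move=> h; apply/eqP; apply/negPn/negP => pn0.
have [x [xn px]] := exists_nonroot [:: t] pn0.
by move: px; rewrite h ?eqxx //; move: xn; rewrite inE.
Qed.
End F.


Section Main.
Variables (k : fieldType) (hc : [pchar k] =i pred0) (N : nat)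
  (A1 A2 : 'M[k]_N) (s1 : A1^T = A1) (s2 : A2^T = A2).

Definition Bm : 'M[{poly k}]_N :=
  \matrix_(i, j) ((A1 i j)%:P + 'X * (A2 i j)%:P).

Lemma detB : pencil_det A1 A2 = 0 -> \det Bm = 0.
Proof.
move=> h; pose h2 : 'I_2 -> {poly k} := fun i => if i == ord0 then 1 else 'X.
pose f : {rmorphism _ -> _} := mmap (@polyC k) h2.
have := congr1 f h; rewrite rmorph0 /pencil_det -det_map_mx => <-.
congr (\det _); apply/matrixP => i j; rewrite !mxE /=.
rewrite mmapD !rmorphM /= !mmapC !mmapX !mmap1U /h2 /=.
by rewrite mul1r.
Qed.

Definition Pm (t : k) : 'M[k]_N := A1 + t *: A2.
Definition vt (w : 'rV[{poly k}]_N) (t : k) : 'rV[k]_N := map_mx (horner_eval t) w.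
Definition fx (x : 'rV[k]_N) : 'I_N -> k := fun i => x 0 i.

Lemma mapB t : map_mx (horner_eval t) Bm = Pm t.
Proof.
apply/matrixP => i j; rewrite !mxE /= horner_evalE.
by rewrite hornerD hornerM hornerX !hornerC mulrC.
Qed.

Lemma vker w t : w *m Bm = 0 -> vt w t *m Pm t = 0.
Proof.
by move=> h; rewrite /vt -mapB -map_mxM h; apply/matrixP => i j; rewrite !mxE rmorph0.
Qed.

Lemma Pm_sym t : (Pm t)^T = Pm t.
Proof. by rewrite /Pm linearD linearZ /= s1 s2. Qed.

Lemma kerL_of (A : 'M[k]_N) x : x *m A = 0 ->
  forall j, \sum_(i < N) fx x i * A i j = 0.
Proof. by move=> h j; have := congr1 (fun M : 'rV_N => M 0 j) h; rewrite !mxE. Qed.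

Lemma kerR_of (A : 'M[k]_N) x : x *m A = 0 -> A^T = A ->
  forall i, \sum_(j < N) A i j * fx x j = 0.
Proof.
move=> h hA i; apply: etrans (kerL_of h i); apply: eq_bigr => j _.
have := congr1 (fun M : 'M[k]_N => M j i) hA; rewrite mxE => ->; exact: mulrC.
Qed.

Lemma ortho w (hw : w *m Bm = 0) s t : s != t ->
  bil A2 (fx (vt w s)) (fx (vt w t)) = 0.
Proof.
move=> st.
have h1 : bil (Pm t) (fx (vt w s)) (fx (vt w t)) = 0.
  apply: bil_kerR; apply: kerR_of (vker t hw) (Pm_sym t).
have h2 : bil (Pm s) (fx (vt w s)) (fx (vt w t)) = 0.
  apply: bil_kerL; apply: kerL_of (vker s hw).
rewrite /Pm !bil_addA in h1 h2.
have : (t - s) * bil A2 (fx (vt w s)) (fx (vt w t)) = 0.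
  rewrite mulrBl; apply/eqP; rewrite subr_eq0; apply/eqP.
  by apply: (addrI (bil A1 (fx (vt w s)) (fx (vt w t)))); rewrite h1 h2.
by move/eqP; rewrite mulf_eq0 subr_eq0 eq_sym (negbTE st) => /eqP.
Qed.

Lemma self_ortho w (hw : w *m Bm = 0) t :
  bil A2 (fx (vt w t)) (fx (vt w t)) = 0.
Proof.
pose q : {poly k} := \sum_(i < N) \sum_(j < N)
   ((A2 i j)%:P * w 0 i * (fx (vt w t) j)%:P).
have qE s : q.[s] = bil A2 (fx (vt w s)) (fx (vt w t)).
  rewrite /q horner_sum; apply: eq_bigr => i _.
  rewrite horner_sum; apply: eq_bigr => j _.
  by rewrite !hornerM !hornerC /fx /vt !mxE horner_evalE.
rewrite -qE (@poly_eq0_except _ hc q t) ?horner0 // => s st.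
by rewrite qE ortho.
Qed.

Lemma onV1 w (hw : w *m Bm = 0) t : bil A1 (fx (vt w t)) (fx (vt w t)) = 0.
Proof.
have h := bil_kerL (fx (vt w t)) (kerL_of (vker t hw)).
by rewrite /Pm bil_addA self_ortho // mulr0 addr0 in h.
Qed.

Lemma singular w (hw : w *m Bm = 0) t : vt w t != 0 ->
  singular_pt (qform A1) (qform A2) (fx (vt w t)).
Proof.
move=> nz; split.
  split.
    move=> h0; move/eqP: nz; apply; apply/rowP => i.
    by rewrite [RHS]mxE; exact: (congr1 (fun f => f i) h0).
  by rewrite !qform_eval onV1 // self_ortho.
set M := (X in \rank X).
pose u : 'rV[k]_2 := \row_r (if r == ord0 then 1 else t).
have uM : u *m M = 0.
  apply/rowP => j; rewrite !mxE big_ord_recr big_ord1 /= !mxE /=.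
  rewrite !qform_deriv_eval.
  transitivity (\sum_(i < N) fx (vt w t) i * Pm t i j +
                \sum_(i < N) Pm t j i * fx (vt w t) i).
    rewrite mul1r mulr_sumr -!big_split; apply: eq_bigr => i _ /=.
    by rewrite !mxE; ring.
  by rewrite (kerL_of (vker t hw) j) (kerR_of (vker t hw) (Pm_sym t) j) addr0.
have : (\rank u <= \rank (kermx M))%N by apply: mxrankS; apply/sub_kermxP.
have -> : \rank u = 1%N.
  rewrite rank_rV; case: eqP => // /rowP /(_ ord0); rewrite !mxE /=.
  by move/eqP; rewrite oner_eq0.
by rewrite mxrank_ker subn_gt0.
Qed.
End Main.


Lemma cone_of (k : fieldType) N (A1 A2 : 'M[k]_N) (s1 : A1^T = A1) (s2 : A2^T = A2)
  (z : 'rV[k]_N) : z != 0 -> z *m A1 = 0 -> z *m A2 = 0 ->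
  is_cone (qform A1) (qform A2).
Proof.
move=> nz h1 h2.
have [L [s _]] := closure_exists k.
have kerL' (A : 'M[k]_N) (hA : z *m A = 0) j :
    \sum_(i < N) s (z 0 i) * (map_mx s A) i j = 0.
  transitivity (s (\sum_(i < N) fx z i * A i j)); last by rewrite (kerL_of hA j) rmorph0.
  rewrite rmorph_sum; apply: eq_bigr => i _; by rewrite mxE rmorphM.
have symL (A : 'M[k]_N) : A^T = A -> (map_mx s A)^T = map_mx s A.
  by move=> hA; rewrite map_trmx hA.
have [i0 hi0] : exists i, z 0 i != 0.
  case: (pickP (fun i => z 0 i != 0)) => [i hi|h0]; first by exists i.
  case/eqP: nz; apply/rowP => i; rewrite mxE; have := h0 i.
  by move/negbFE/eqP.
exists L, s, (fun i => s (z 0 i)) => /=.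
rewrite !map_qform; split.
  split.
    move=> /(congr1 (fun f => f i0)) /= /eqP; rewrite fmorph_eq0.
    exact/negP.
  by rewrite !qform_eval !(bil_kerL _ (kerL' _ _)).
move=> x [_ [hx1 hx2]] a b.
rewrite !qform_eval in hx1 hx2 *.
by rewrite !bil_cone ?hx1 ?hx2 ?mulr0 ?symL // => j; apply: kerL'.
Qed.

Theorem lemma5p9 (k : fieldType) (n : nat) (A1 A2 : 'M[k]_n.+1) :
  [pchar k] =i pred0 ->
  A1^T = A1 -> A2^T = A2 ->
  regular_seq2 (qform A1) (qform A2) ->
  geom_integral (qform A1) (qform A2) ->
  ~ is_cone (qform A1) (qform A2) ->
  pencil_det A1 A2 = 0 ->
  infinitely_many_pts (singular_pt (qform A1) (qform A2)).
Proof.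
move=> hc s1 s2 _ _ ncone hdet.
have /det0P [w wn0 hw] : \det (Bm A1 A2) == 0 by rewrite detB.
have [i0 hi0] : exists i, w 0 i != 0.
  case: (pickP (fun i => w 0 i != 0)) => [i hi|h0]; first by exists i.
  case/eqP: wn0; apply/rowP => i; rewrite mxE; have := h0 i.
  by move/negbFE/eqP.
move=> [m [y hy]].
have [ts [hs hu ha]] := build_seq hc m.+1 hi0.
pose tt (a : 'I_m.+1) := nth 0 ts a.
have vnz a : vt w (tt a) != 0.
  apply/negP => /eqP /rowP /(_ i0); rewrite !mxE horner_evalE => /eqP.
  apply/negP; apply: (allP ha); apply: mem_nth; rewrite hs; exact: ltn_ord.
have ex a : exists j, proj_eq (fx (vt w (tt a))) (y j).
  by apply: hy; apply: singular.
have [f hf] := fin_all_exists ex.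
have [a [b [ab fab]]] : exists a b, a != b /\ f a = f b.
  apply: Classical_Prop.NNPP => H.
  have inj : injective f.
    move=> a b fab; case: (eqVneq a b) => // ab; exfalso; apply: H.
    by exists a, b.
  by have := leq_card f inj; rewrite !card_ord ltnn.
have tab : tt a != tt b.
  by rewrite /tt nth_uniq ?hs ?ltn_ord.
have [c1 [c1n hc1]] := hf a; have [c2 [c2n hc2]] := hf b.
rewrite -fab in hc2.
set va := vt w (tt a) in hc1 vnz *; set vb := vt w (tt b) in hc2 vnz *.
have vab : va = (c1 / c2) *: vb.
  apply/rowP => i; rewrite [RHS]mxE; have := hc1 i; rewrite /fx => ->.
  have := hc2 i; rewrite /fx => ->; rewrite mulrA divfK //.
have kb : vb *m Pm A1 A2 (tt b) = 0 by apply: vker.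
have ka : vb *m Pm A1 A2 (tt a) = 0.
  have := vker (tt a) hw; rewrite -/va vab -scalemxAl => /eqP.
  rewrite scaler_eq0 mulf_eq0 invr_eq0 (negbTE c1n) (negbTE c2n) /=.
  by move/eqP.
have k2 : vb *m A2 = 0.
  have : (tt a - tt b) *: (vb *m A2) = 0.
    have : vb *m Pm A1 A2 (tt a) - vb *m Pm A1 A2 (tt b) = 0 by rewrite ka kb subrr.
    by rewrite /Pm !mulmxDr opprD addrACA subrr add0r -!scalemxAr scalerBl.
  move/eqP; rewrite scaler_eq0 subr_eq0 (negbTE tab) /=; by move/eqP.
have k1 : vb *m A1 = 0.
  by move: kb; rewrite /Pm mulmxDr -scalemxAr k2 scaler0 addr0.
apply: ncone; apply: (cone_of s1 s2 (vnz b) k1 k2).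
Qed.
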